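(* Let $S$ be a semigroup with finite $\mathcal{R}$-height, and let $A$ be a right ideal of $S$. Let $n$ be the maximum length of a chain of $\mathcal{R}$-classes of $S$ that are contained in $A$. Then $\mathrm{H}_{\mathcal{R}}(A)\leq 2n-1$.
   Context: For a semigroup $S$, $S^1$ denotes $S$ with an identity adjoined if necessary. Green's preorder: $a\leq_{\mathcal{R}} b$ iff $aS^1\subseteq bS^1$; $\mathcal{R}$ is the associated equivalence. $\mathcal{R}$-classes are ordered by $R_a\leq R_b$ iff $a\leq_{\mathcal{R}} b$, and the $\mathcal{R}$-height $\mathrm{H}_{\mathcal{R}}(S)$ is the supremum of the cardinalities of chains of $\mathcal{R}$-classes. A right ideal is a non-empty subset $A$ with $AS\subseteq A$; $\mathrm{H}_{\mathcal{R}}(A)$ is computed in the semigroup $A$ itself. *)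

(* Defs.v *)
From mathcomp Require Import all_boot.
Set Implicit Arguments. Unset Strict Implicit. Unset Printing Implicit Defensive.

Section Green.
Variables (T : Type) (mul : T -> T -> T).

(* x \in b P^1, computed inside the subsemigroup P (P = fun _ => True gives bS^1) *)
Definition inS1 (P : T -> Prop) (b x : T) : Prop :=
  x = b \/ exists s, P s /\ x = mul b s.

Definition leR (P : T -> Prop) (a b : T) : Prop :=
  forall x, inS1 P a x -> inS1 P b x.

Definition eqR (P : T -> Prop) (a b : T) : Prop := leR P a b /\ leR P b a.

Definition ltR (P : T -> Prop) (a b : T) : Prop := leR P a b /\ ~ leR P b a.

(* There is a chain of k R-classes (of the semigroup P) whose representatives
   all satisfy Q: representatives f 0 > f 1 > ... > f (k-1) (strictly). *)
Definition Rchain (P Q : T -> Prop) (k : nat) : Prop :=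
  exists f : nat -> T,
    (forall i, i < k -> P (f i) /\ Q (f i)) /\
    (forall i, i.+1 < k -> ltR P (f i.+1) (f i)).

Definition HR_le (P : T -> Prop) (N : nat) : Prop :=
  forall k, Rchain P P k -> k <= N.

Definition finite_R_height : Prop := exists N, HR_le (fun _ => True) N.

Definition right_ideal (A : T -> Prop) : Prop :=
  (exists a, A a) /\ forall a s, A a -> A (mul a s).

Definition Rclass_in (A : T -> Prop) (a : T) : Prop :=
  forall b, eqR (fun _ => True) b a -> A b.

Definition max_Rchain_in (A : T -> Prop) (n : nat) : Prop :=
  Rchain (fun _ => True) (Rclass_in A) n /\
  forall k, Rchain (fun _ => True) (Rclass_in A) k -> k <= n.

End Green.

(* Main.v *)
Require Import Defs.
From mathcomp Require Import all_boot.
From mathcomp Require Import zify.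
From Stdlib Require Import Lia.
Set Implicit Arguments.

Section Aux.
Variables (T : Type) (mul : T -> T -> T).
Hypothesis assoc : forall x y z, mul x (mul y z) = mul (mul x y) z.

Lemma leR_char (P : T -> Prop) (hP : forall s t, P s -> P (mul s t)) a b :
  leR mul P a b <-> inS1 mul P b a.
Proof.
split; first by move=> h; apply: h; left.
move=> [->|[t [Pt ->]]] x [->|[s [Ps ->]]].
- by left.
- by right; exists s.
- by right; exists t.
- by right; exists (mul t s); split; [apply: hP|rewrite assoc].
Qed.

Lemma leRS_char a b : leR mul (fun _ => True) a b <-> inS1 mul (fun _ => True) b a.
Proof. by apply: leR_char. Qed.

Variable A : T -> Prop.
Hypothesis hA : forall a s, A a -> A (mul a s).

Lemma leRA_char a b : leR mul A a b <-> inS1 mul A b a.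
Proof. by apply: leR_char => s t; apply: hA. Qed.

Lemma leRA_S a b : A b -> leR mul A a b -> leR mul (fun _ => True) a b.
Proof.
move=> Ab /leRA_char h; apply/leRS_char.
case: h => [->|[s [_ ->]]]; [by left|by right; exists s].
Qed.

Lemma leR_trans P a b c : leR mul P a b -> leR mul P b c -> leR mul P a c.
Proof. by move=> h1 h2 x /h1 /h2. Qed.

Lemma Rclass_of a : A a -> Rclass_in mul A a.
Proof.
move=> Aa b [/leRS_char [->|[s [_ ->]]] _] //; exact: hA.
Qed.

Lemma key x y z : A x -> A y -> A z ->
  ltR mul A y x -> ltR mul A z y -> ~ leR mul (fun _ => True) x z.
Proof.
move=> Ax Ay Az [_ nyx] [hzy nyz] /leRS_char hxz.
move/leRA_char: hzy => [ezy|[v [Av ezy]]].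
  by apply: nyz; subst z; move=> w.
apply: nyx; apply/leRA_char.
case: hxz => [->|[w [_ ->]]].
  by right; exists v.
by right; exists (mul v w); split; [exact: hA|rewrite ezy assoc].
Qed.

Lemma sq_lemma x y : A y -> leR mul (fun _ => True) x y ->
  leR mul (fun _ => True) y (mul y y) -> leR mul A x y.
Proof.
move=> Ay /leRS_char hxy /leRS_char hy; apply/leRA_char.
case: hxy => [->|[w [_ ->]]]; first by left.
case: hy => [e|[r [_ e]]].
  by right; exists (mul y w); split; [exact: hA|rewrite {1}e -assoc].
right; exists (mul y (mul r w)); split; first exact: hA.
by rewrite {1}e !assoc.
Qed.

End Aux.

Theorem theorem3p6 (T : Type) (mul : T -> T -> T)
    (assoc : forall x y z, mul x (mul y z) = mul (mul x y) z)
    (hfin : finite_R_height mul)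
    (A : T -> Prop) (hA : right_ideal mul A)
    (n : nat) (hn : max_Rchain_in mul A n) :
  HR_le mul A (2 * n - 1).
Proof.
case: hA => _ hA; case: hn => _ hmax.
move=> k [f [hf hlt]].
have Af : forall i, i < k -> A (f i) by move=> i /hf [].
case: k hf hlt Af => [|k'] hf hlt Af; first by [].
set k := k'.+1 in hf hlt Af *.
set m := k./2.
set y := f k'.
pose h i := if 2 * i < k then f (2 * i) else mul y y.
have hk : k = m.*2 \/ k = m.*2.+1.
  by have := odd_double_half k; case: (odd k) => /= <-; [right|left].
have Ay : A y by apply: Af; rewrite /k.
have Ah : forall i, A (h i).
  by move=> i; rewrite /h; case: ifP => [/Af|_] //; apply: hA.
suff : m.+1 <= n by lia.
apply: hmax; exists h; split.
  by move=> i _; split => //; apply: Rclass_of.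
move=> i hi.
have h2i : 2 * i < k by lia.
rewrite /h h2i.
case: ifP => h2i2.
  have l1 := hlt (2 * i) ltac:(lia).
  have l2 := hlt (2 * i).+1 ltac:(lia).
  split.
    apply: (leR_trans (b := f (2 * i).+1)).
      by apply: (leRA_S assoc hA (Af _ _)); [lia| rewrite (_ : (2 * i.+1) = (2 * i).+2); [case: l2|lia]].
    by apply: (leRA_S assoc hA (Af _ _)); [lia|case: l1].
  rewrite (_ : (2 * i.+1) = (2 * i).+2); last lia.
  by apply: (key assoc hA (Af (2 * i) ltac:(lia)) (Af (2 * i).+1 ltac:(lia)) (Af (2 * i).+2 ltac:(lia))).
have ek : k' = (2 * i).+1 by lia.
have l1 := hlt (2 * i) ltac:(lia).
rewrite -ek in l1.
set x := f (2 * i) in l1 *.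
have Ax : A x by apply: Af; lia.
have yyy : leR mul (fun _ => True) (mul y y) y.
  by apply/(leRS_char _ assoc); right; exists y.
have yx : leR mul (fun _ => True) y x by apply: (leRA_S assoc hA Ax); case: l1.
split; first exact: leR_trans yyy yx.
move=> xyy.
case: l1 => _; apply.
apply: (sq_lemma assoc hA Ay).
  exact: leR_trans xyy yyy.
exact: leR_trans yx xyy.
Qed.
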